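(* Let $q$ be a prime power, $r\ge 1$ an integer, and $\mathcal{S}$ a $q^r$-divisible spanning set of $q^{r+1}$ points in $\mathrm{PG}(v-1,q)$. Then the number of hyperplanes $H$ with $|\mathcal{S}\cap H|=q^r$ is at least $\frac{q^v-1}{q-1}-\left(q^{v-r-1}-q+1\right)$.
   Context: $\mathrm{PG}(v-1,q)$ is the projective space of $\mathbb{F}_q^v$; points are $1$-dimensional and hyperplanes $(v-1)$-dimensional subspaces of $\mathbb{F}_q^v$. A set $\mathcal{S}$ of points is spanning if its points span $\mathbb{F}_q^v$, and it is $q^r$-divisible if $|\mathcal{S}\cap H|\equiv|\mathcal{S}|\pmod{q^r}$ for every hyperplane $H$. *)

(* Defs.v *)
From mathcomp Require Import all_boot all_order all_algebra.
Set Implicit Arguments. Unset Strict Implicit. Unset Printing Implicit Defensive.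
Import GRing.Theory Num.Theory.

(* Subspaces of F^v are represented (as in mxalgebra) by square matrices
   'M[F]_v in canonical form <<A>>%MS = A, so that distinct subspaces are
   distinct matrices.  The subspace is the row space of the matrix. *)

Section PG.
Variables (F : finFieldType) (v : nat).

Definition is_point (P : 'M[F]_v) : bool :=
  (\rank P == 1%N) && (<<P>>%MS == P).

Definition is_hyperplane (H : 'M[F]_v) : bool :=
  (\rank H == v.-1) && (<<H>>%MS == H).

Definition pts_in (S : {set 'M[F]_v}) (H : 'M[F]_v) : {set 'M[F]_v} :=
  [set P in S | (P <= H)%MS].

Definition spanning (S : {set 'M[F]_v}) : Prop :=
  \rank (\sum_(P in S) P)%MS = v.

Definition divisible (S : {set 'M[F]_v}) (m : nat) : Prop :=
  forall H : 'M[F]_v, is_hyperplane H -> #|pts_in S H| = #|S| %[mod m].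

Definition num_hyp (S : {set 'M[F]_v}) (k : nat) : nat :=
  #|[set H : 'M[F]_v | is_hyperplane H && (#|pts_in S H| == k)]|.
End PG.

(* Main.v *)
Require Import Defs.
From mathcomp Require Import all_boot all_order all_algebra.
Import Order.TTheory GRing.Theory Num.Theory.
From mathcomp Require Import ring lra.
Set Implicit Arguments. Unset Strict Implicit. Unset Printing Implicit Defensive.
Local Open Scope ring_scope.

Section Cnt.
Variables (F : finFieldType) (v : nat).
Local Notation q := #|F|.

Lemma card_sub k (K : 'M[F]_(k, v)) :
  #|[set u : 'rV[F]_v | (u <= K)%MS]| = (q ^ \rank K)%N.
Proof.
have -> : [set u : 'rV[F]_v | (u <= K)%MS] =
   [set (D *m row_base K) | D : 'rV[F]_(\rank K)].
  apply/setP=> u; rewrite inE; apply/idP/imsetP.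
    rewrite -(eq_row_base K) => /submxP[D ->]; by exists D.
  by move=> [D _ ->]; rewrite -(eq_row_base K); apply/submxP; exists D.
rewrite card_imset; last exact: row_free_inj (row_base_free K).
by rewrite card_mx mul1n.
Qed.

Lemma card_ker k (A : 'M[F]_(k, v)) :
  #|[set c : 'cV[F]_v | A *m c == 0]| = (q ^ (v - \rank A))%N.
Proof.
rewrite -mxrank_tr -mxrank_ker -card_sub.
rewrite -(card_imset _ (@trmx_inj _ _ _)).
apply: eq_card => u; rewrite inE; apply/imsetP/idP.
  by move=> [c]; rewrite inE => /eqP Ac ->; rewrite sub_kermx -trmx_mul Ac trmx0.
rewrite sub_kermx => /eqP Au; exists u^T; last by rewrite trmxK.
rewrite inE -(inj_eq (@trmx_inj _ _ _)) trmx_mul trmxK Au trmx0 //.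
Qed.

Definition hp (c : 'cV[F]_v) : 'M[F]_v := <<kermx c>>%MS.

Lemma rank_cV (c : 'cV[F]_v) : c != 0 -> \rank c = 1%N.
Proof.
move=> nz; apply/eqP; rewrite eqn_leq rank_leq_col lt0n mxrank_eq0 nz.
by [].
Qed.

Lemma sub_hp k (P : 'M[F]_(k, v)) c : (P <= hp c)%MS = (P *m c == 0).
Proof. by rewrite /hp genmxE sub_kermx. Qed.

Lemma hp_hyp c : c != 0 -> is_hyperplane (hp c).
Proof.
move=> nz; rewrite /is_hyperplane /hp genmx_id eqxx andbT genmxE mxrank_ker.
by rewrite rank_cV // subn1.
Qed.

Lemma hyp_hp H c : is_hyperplane H -> c != 0 -> H *m c == 0 -> H = hp c.
Proof.
case/andP=> /eqP rH /eqP gH nz Hc.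
have sH : (H <= kermx c)%MS by rewrite sub_kermx.
have := (mxrank_leqif_eq sH).2.
rewrite mxrank_ker rank_cV // subn1 rH eqxx => /esym/genmxP.
by rewrite gH.
Qed.

Lemma card_hp H : (0 < v)%N -> is_hyperplane H ->
  #|[set c : 'cV[F]_v | (c != 0) && (hp c == H)]| = (q - 1)%N.
Proof.
move=> v0 hH.
have -> : [set c : 'cV[F]_v | (c != 0) && (hp c == H)] =
          [set c in [set c : 'cV[F]_v | H *m c == 0] | c != 0].
  apply/setP=> c; rewrite !inE; case: (boolP (c == 0)) => [/eqP ->|nz] /=.
    by rewrite andbF.

  rewrite andbT; apply/eqP/idP; first by move=> <-; rewrite -sub_hp submx_refl.
  by move=> Hc; rewrite -(hyp_hp hH nz Hc).
have := cardsD1 0 [set c : 'cV[F]_v | H *m c == 0].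
rewrite !inE mulmx0 eqxx card_ker.
case/andP: hH => /eqP -> _.
have -> : (v - v.-1 = 1)%N by case: v v0 => // n _; rewrite subSn // subnn.
rewrite expn1 add1n => ->; rewrite subn1 /=.
by apply: eq_card => c; rewrite !inE andbC.
Qed.

Lemma dcount (f : 'M[F]_v -> rat) : (0 < v)%N ->
  \sum_(c : 'cV[F]_v | c != 0) f (hp c) =
  (q - 1)%:R * \sum_(H : 'M[F]_v | is_hyperplane H) f H.
Proof.
move=> v0.
rewrite (partition_big hp (fun H => is_hyperplane H)); last by move=> c; exact: hp_hyp.
rewrite big_distrr /=; apply: eq_bigr => H hH.
rewrite (eq_bigr (fun _ => f H)); last by move=> c /andP[_ /eqP ->].
rewrite sumr_const -(card_hp v0 hH) mulr_natl.
by rewrite cardsE.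
Qed.

Lemma sum_ind (T : finType) (b : pred T) :
  \sum_(x : T) (b x)%:R = #|b|%:R :> rat.
Proof.
rewrite (eq_bigr (fun x => if b x then 1 else 0)); last by move=> x _; case: (b x).
by rewrite -big_mkcond sumr_const.
Qed.

Lemma sum_ker k (A : 'M[F]_(k, v)) :
  \sum_(c : 'cV[F]_v | c != 0) (A *m c == 0)%:R = (q ^ (v - \rank A))%:R - 1 :> rat.
Proof.
have := sum_ind (fun c : 'cV[F]_v => A *m c == 0).
rewrite (bigD1 0) //= mulmx0 eqxx => E.
have -> : (q ^ (v - \rank A))%N = #|(fun c : 'cV[F]_v => A *m c == 0)|.
  by rewrite -card_ker; apply: eq_card => c; rewrite inE.
by rewrite -E addrC addrK.
Qed.

Lemma q_gt1 : (1 < q)%N.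
Proof. by apply/card_gt1P; exists 0, 1; split => //; rewrite eq_sym oner_neq0. Qed.

Lemma rank_pair (P P' : 'M[F]_v) : is_point P -> is_point P' -> P != P' ->
  \rank (col_mx P P') = 2%N.
Proof.
case/andP=> /eqP rP /eqP gP; case/andP=> /eqP rP' /eqP gP' neq.
rewrite -(addsmxE P P').1.
apply/eqP; rewrite eqn_leq; apply/andP; split.
  by have := (mxrank_adds_leqif P P').1; rewrite rP rP'.
rewrite ltnNge; apply/negP => le1.
have h1 : (P == P + P')%MS.
  have := (mxrank_leqif_eq (addsmxSl P P')).2; rewrite rP => <-.
  by rewrite eqn_leq le1 -rP mxrankS // addsmxSl.
have h2 : (P' == P + P')%MS.
  have := (mxrank_leqif_eq (addsmxSr P P')).2; rewrite rP' => <-.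
  by rewrite eqn_leq le1 -rP' mxrankS // addsmxSr.
move/genmxP: h1; move/genmxP: h2 => e2 e1.
by move: neq; rewrite -gP -gP' e1 e2 eqxx.
Qed.

Lemma mid_ineq (m k : nat) : (0 < m)%N -> (m %| k)%N ->
  m%:R ^+ 2 * (1 - (k == m)%:R) <= (k%:R - m%:R) ^+ 2 :> rat.
Proof.
move=> m0 /dvdnP[j ->]; case: (boolP (j * m == m)%N) => [/eqP ->|ne].
  by rewrite /= subrr mulr0 sqr_ge0.
rewrite (_ : false%:R = 0 :> rat) // subr0 mulr1.
case: j ne => [|[|j]] ne.
  by rewrite mul0n sub0r sqrrN.
  by rewrite mul1n eqxx in ne.
rewrite natrM.
have hJ : (2 : rat) <= j.+2%:R by rewrite ler_nat.
have hM : (0 : rat) <= m%:R by rewrite ler0n.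
set J : rat := j.+2%:R in hJ *; set M : rat := m%:R in hM *.
have h : 0 <= M ^+ 2 * ((J - 2) * J).
  by apply: mulr_ge0; [exact: sqr_ge0 | apply: mulr_ge0; lra].
nra.
Qed.

Lemma card_in (A : {set 'M[F]_v}) (b : pred 'M[F]_v) :
  #|[set x in A | b x]|%:R = \sum_(x in A) (b x)%:R :> rat.
Proof.
rewrite (eq_bigr (fun x => if b x then 1 else 0)); last by move=> x _; case: (b x).
rewrite -big_mkcondr sumr_const; congr (_%:R).
by apply: eq_card => x; rewrite !inE.
Qed.

Lemma pts_hp (S : {set 'M[F]_v}) c :
  #|pts_in S (hp c)|%:R = \sum_(P in S) (P *m c == 0)%:R :> rat.
Proof.
rewrite /pts_in card_in; apply: eq_bigr => P _; by rewrite sub_hp.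
Qed.

Lemma sq_expand (I : finType) (p : pred I) (x : I -> rat) (a : rat) :
  \sum_(i | p i) (x i - a) ^+ 2 =
  \sum_(i | p i) x i ^+ 2 - 2 * a * \sum_(i | p i) x i + a ^+ 2 * \sum_(i | p i) 1.
Proof.
rewrite !mulr_sumr -sumrB -big_split /=; apply: eq_bigr => i _; ring.
Qed.
End Cnt.

Theorem mainTheorem2 (F : finFieldType) (v r : nat) (S : {set 'M[F]_v}) :
  (0 < r)%N ->
  (forall P, P \in S -> is_point P) ->
  spanning S ->
  divisible S (#|F| ^ r)%N ->
  #|S| = (#|F| ^ r.+1)%N ->
  (num_hyp S (#|F| ^ r)%N)%:R >=
    ((#|F|%:R ^+ v - 1) / (#|F|%:R - 1)
     - (#|F|%:R ^ (v%:Z - r%:Z - 1) - #|F|%:R + 1) : rat).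
Proof.
move=> r0 pts _ div cS.
set q := #|F|.
have q1 : (1 < q)%N by exact: q_gt1.
set m := (q ^ r)%N.
have m0 : (0 < m)%N by rewrite expn_gt0 ltnW.
have v2 : (2 <= v)%N.
  have : (1 < #|S|)%N.
    by rewrite cS expnS (leq_trans q1) // leq_pmulr // expn_gt0 ltnW.
  case/card_gt1P=> P [P' [PS P'S ne]].
  by rewrite -(rank_pair (pts P PS) (pts P' P'S) ne) rank_leq_col.
have v0 : (0 < v)%N by rewrite ltnW.
set kr := fun H : 'M[F]_v => (#|pts_in S H|)%:R : rat.
set A0 := \sum_(H : 'M[F]_v | is_hyperplane H) (1 : rat).
set A1 := \sum_(H : 'M[F]_v | is_hyperplane H) kr H.
set A2 := \sum_(H : 'M[F]_v | is_hyperplane H) kr H ^+ 2.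
set a1 := \sum_(H : 'M[F]_v | is_hyperplane H) (#|pts_in S H| == m)%:R : rat.
have Ea1 : (num_hyp S m)%:R = a1.
  rewrite /num_hyp /a1 (eq_bigr (fun H => if #|pts_in S H| == m then 1 else 0)).
    rewrite -big_mkcondr sumr_const; congr (_%:R).
    by apply: eq_card => H; rewrite !inE.
  by move=> H _; case: (_ == _).
have E0 : (q - 1)%:R * A0 = (q ^ v)%:R - 1.
  rewrite -(dcount (fun _ => 1)) //.
  have := sum_ker (0 : 'M[F]_(1, v)); rewrite mxrank0 subn0 => <-.
  by apply: eq_bigr => c _; rewrite mul0mx eqxx.
have E1 : (q - 1)%:R * A1 = (#|S| * (q ^ (v - 1)))%:R - #|S|%:R.
  rewrite -(dcount kr) //.
  rewrite (eq_bigr (fun c => \sum_(P in S) (P *m c == 0)%:R)); last first.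
    by move=> c _; rewrite /kr pts_hp.
  rewrite exchange_big /=.
  rewrite (eq_bigr (fun _ => (q ^ (v - 1))%:R - 1)); last first.
    move=> P PS; rewrite sum_ker; case/andP: (pts P PS) => /eqP -> _ //.
  by rewrite sumr_const natrM mulrnBl mulr_natl.
have E2 : (q - 1)%:R * A2 =
   #|S|%:R * (((q ^ (v - 1))%:R - 1) + (#|S| - 1)%:R * ((q ^ (v - 2))%:R - 1)).
  rewrite -(dcount (fun H => kr H ^+ 2)) //.
  rewrite (eq_bigr (fun c => \sum_(P in S) \sum_(P' in S)
              (P *m c == 0)%:R * (P' *m c == 0)%:R)); last first.
    move=> c _; rewrite /kr pts_hp expr2 mulr_suml; apply: eq_bigr => P _.
    by rewrite mulr_sumr.
  rewrite exchange_big /=.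
  rewrite (eq_bigr (fun _ => ((q ^ (v - 1))%:R - 1) + (#|S| - 1)%:R * ((q ^ (v - 2))%:R - 1))); last first.
    move=> P PS; rewrite exchange_big /= (bigD1 P) //=.
    have -> : \sum_(c : 'cV[F]_v | c != 0) (P *m c == 0)%:R * (P *m c == 0)%:R
              = (q ^ (v - 1))%:R - 1 :> rat.
      case/andP: (pts P PS) => /eqP rP _; have hK := sum_ker P; rewrite rP in hK; rewrite -hK.
      by apply: eq_bigr => c _; case: (_ == _); rewrite ?mulr1 ?mulr0.
    congr (_ + _).
    rewrite (eq_bigr (fun _ => (q ^ (v - 2))%:R - 1)); last first.
      move=> P' /andP[P'S ne].
      rewrite (eq_bigr (fun c => (col_mx P P' *m c == 0)%:R)); last first.
        by move=> c _; rewrite mul_col_mx col_mx_eq0; case: (P *m c == 0); case: (_ == 0);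
          rewrite ?mulr1 ?mulr0.
      by rewrite sum_ker rank_pair // ?pts // eq_sym.
    rewrite sumr_const mulr_natl; congr (_ *+ _).
    rewrite (cardD1 P S) PS add1n subn1 /=; apply: eq_card => x; rewrite !inE andbC //.
  by rewrite sumr_const; exact: (esym (mulr_natl _ _)).
have per : m%:R ^+ 2 * (A0 - a1) <= A2 - 2 * m%:R * A1 + m%:R ^+ 2 * A0.
  rewrite -sq_expand /A0 /a1 -sumrB mulr_sumr; apply: ler_sum => H hH.
  apply: mid_ineq => //.
  have := div H hH; rewrite cS expnS -/m modnMl => /eqP.
  by [].
have key : 2 * m%:R * A1 - A2 <= m%:R ^+ 2 * a1 by lra.
have qR : (q - 1)%:R = q%:R - 1 :> rat by rewrite natrB // ltnW.
have nR : #|S|%:R = q%:R * m%:R :> rat by rewrite cS expnS natrM.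
have nR1 : (#|S| - 1)%:R = q%:R * m%:R - 1 :> rat.
  by rewrite natrB ?cS ?expn_gt0 ?(ltnW q1) // -cS nR.
move: E0 E1 E2; rewrite qR nR1 natrM nR.
case: v v2 {v0 div} S pts cS kr A0 A1 A2 a1 Ea1 per key nR nR1 => [|[|w]] // _ S pts cS kr A0 A1 A2 a1 Ea1 per key nR nR1.
rewrite !subSS !subn0 !natrX.
set Q := q%:R : rat; set M := Q ^+ r; set X := Q ^+ w.
have Mq : M = Q ^+ r by [].
have Q1 : 1 < Q by rewrite ltr1n.
have M0 : 0 < M by rewrite exprn_gt0 // (lt_trans ltr01).
move=> E0 E1 E2.
set y := Q ^ (w.+2%:Z - r%:Z - 1).
have hy : M * y = Q * X.
  have Q0 : Q != 0 by rewrite lt0r_neq0 // (lt_trans ltr01).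
  apply: (mulIf Q0).
  have : y * (Q ^+ r * Q) = Q ^+ w.+2.
    have e := expfzDr (w.+2%:Z - r%:Z - 1) (r.+1)%:Z Q0.
    rewrite -exprSr /y -[Q ^+ r.+1]/(Q ^ (r.+1)%:Z) -e.
    change (Q ^+ w.+2) with (Q ^ (w.+2)%:Z); congr (_ ^ _).
    by rewrite -addn1 PoszD; ring.
  move=> h; transitivity (y * (M * Q)); first by ring.
  by rewrite h /X !exprS; ring.
rewrite Ea1 /=.
set D := (Q - 1) * M ^+ 2.
have D0 : 0 < D by apply: mulr_gt0; [lra | exact: exprn_gt0].
rewrite -(ler_pM2l D0).
have eqD : D * ((Q ^+ w.+2 - 1) / (Q - 1) - (y - Q + 1)) =
   M ^+ 2 * (Q ^+ w.+2 - 1) - (Q - 1) * M * (M * y) + (Q - 1) ^+ 2 * M ^+ 2.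
  rewrite /D; field; lra.
rewrite eqD hy.
have k2 : (Q - 1) * (2 * M * A1 - A2) <= D * a1.
  rewrite /D -[_ * M ^+ 2 * a1]mulrA; apply: ler_wpM2l; [lra | ].
  by move: key; rewrite /m natrX.
apply: le_trans k2.
have -> : (Q - 1) * (2 * M * A1 - A2) = 2 * M * ((Q - 1) * A1) - (Q - 1) * A2 by ring.
rewrite E1 E2 /X !exprS.
lra.

Qed.
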